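(* For each integer $\lambda$, there are at most finitely many independent Stanley sequences (in root position) with character $\lambda$.
   Context: A set of non-negative integers is 3-free if no three of its elements form an arithmetic progression. For a finite 3-free set $A=\{a_0<\cdots<a_k\}$ of non-negative integers, the Stanley sequence $S(A)=(a_n)_{n\ge0}$ is the increasing sequence with initial terms $a_0,\ldots,a_k$ in which each subsequent $a_{n+1}$ is the smallest integer greater than $a_n$ such that $\{a_0,\ldots,a_{n+1}\}$ is 3-free. Throughout, Stanley sequences are in root position, i.e. $a_0=0$. A Stanley sequence $(a_n)$ is independent with character $\lambda$ if for all sufficiently large $k$: $a_{2^k+i}=a_{2^k}+a_i$ for $0\le i<2^k$, and $a_{2^k}=2a_{2^k-1}-\lambda+1$. *)

(* Defs.v *)
From mathcomp Require Import all_boot all_order all_algebra.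
Set Implicit Arguments. Unset Strict Implicit. Unset Printing Implicit Defensive.
Import GRing.Theory Num.Theory.

Definition threefree (A : seq nat) : Prop :=
  forall x y z, x \in A -> y \in A -> z \in A -> x < y -> y < z -> x + z <> 2 * y.

Definition prefix (a : nat -> nat) (n : nat) : seq nat := [seq a i | i <- iota 0 n.+1].

(* a is the Stanley sequence S(A) (in root position, a_0 = 0) for the finite
   3-free set A = {a_0 < ... < a_k}, for some k: a is increasing, the initial
   segment {a_0..a_k} is 3-free, and for n >= k, a_{n+1} is the smallest
   integer > a_n such that {a_0,...,a_{n+1}} is 3-free. *)
Definition stanley (a : nat -> nat) : Prop :=
  a 0 = 0 /\ (forall n, a n < a n.+1) /\
  exists k, threefree (prefix a k) /\
    forall n, k <= n ->
      threefree (prefix a n.+1) /\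
      (forall m, a n < m -> m < a n.+1 -> ~ threefree (rcons (prefix a n) m)).

Definition independent (a : nat -> nat) (lam : int) : Prop :=
  exists K, forall k, K <= k ->
    (forall i, i < 2 ^ k -> a (2 ^ k + i) = a (2 ^ k) + a i) /\
    ((a (2 ^ k)%N)%:Z = 2 * (a (2 ^ k - 1)%N)%:Z - lam + 1)%R.

(* Main.v *)
Require Import Defs.
From mathcomp Require Import all_boot all_order all_algebra.
From mathcomp Require Import zify.
From Stdlib Require Import Classical ClassicalEpsilon.

Set Implicit Arguments.
Notation pfx := Defs.prefix.

Section Aux.
Variable a : nat -> nat.
Hypothesis inc : forall n, a n < a n.+1.

Lemma inc_lt p q : p < q -> a p < a q.
Proof.
elim: q => // q IH; rewrite ltnS leq_eqVlt => /orP [/eqP -> //|/IH h].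
exact: ltn_trans h (inc q).
Qed.

Lemma inc_le p q : p <= q -> a p <= a q.
Proof. rewrite leq_eqVlt => /orP [/eqP -> //|/inc_lt h]; exact: ltnW. Qed.

Lemma inc_ltE p q : (a p < a q) = (p < q).
Proof.
case: (ltnP p q) => h; first by rewrite inc_lt.
by apply/negbTE; rewrite -leqNgt; apply: inc_le.
Qed.

Lemma inc_ge n : n <= a n.
Proof. elim: n => // n IH; exact: leq_ltn_trans IH (inc n). Qed.

Lemma bracket c M : a 0 < c -> c < a M -> (forall n, a n <> c) ->
  exists i, i < M /\ a i < c < a i.+1.
Proof.
move=> h0; elim: M => [|M IH] hM hn; first by move: (ltn_trans h0 hM); rewrite ltnn.
case: (ltnP c (a M)) => h.
  by case: (IH h hn) => i [hi hc]; exists i; split => //; exact: ltnW.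
exists M; split => //; rewrite hM andbT ltn_neqAle h andbT.
by apply/eqP => e; apply: (hn M).
Qed.
End Aux.
Arguments inc_lt {a} inc {p q}.
Arguments inc_le {a} inc {p q}.
Arguments inc_ltE {a}.
Arguments inc_ge {a}.
Arguments bracket {a}.

Lemma mem_prefix a n x : x \in pfx a n -> exists2 p, p <= n & a p = x.
Proof. by move=> /mapP [p]; rewrite mem_iota add0n ltnS => hp ->; exists p. Qed.

Lemma prefix_mem a n p : p <= n -> a p \in pfx a n.
Proof. by move=> hp; apply: map_f; rewrite mem_iota add0n ltnS. Qed.

Lemma tf_all a : stanley a -> forall p q r, p < q -> q < r -> a p + a r = 2 * a q -> False.
Proof.
case=> _ [inc [k [_ hg]]] p q r hpq hqr he.
have [h _] := hg (maxn k r) (leq_maxl _ _).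
have hr : r <= (maxn k r).+1 by apply: leqW; apply: leq_maxr.
apply: (h (a p) (a q) (a r)); rewrite ?inc_lt //; apply: prefix_mem => //.
- by apply: leq_trans hr; apply: ltnW; apply: ltn_trans hqr.
- by apply: leq_trans hr; apply: ltnW.
Qed.

Definition inS (a : nat -> nat) (c : nat) := exists n, a n = c.
Definition covered (a : nat -> nat) (c : nat) := exists x y, [/\ x < y, y < c, inS a x, inS a y & x + c = 2 * y].

Lemma key a lam : stanley a -> independent a lam ->
  forall c, ~ inS a c -> (lam <= c%:Z)%R -> covered a c.
Proof.
move=> st [K hK] c hc hl.
have st' := st; case: st' => a0 [inc [k0 [_ hg]]].
set k := K + k0 + c + `|lam|%N + 1.
have hk : k < 2 ^ k by apply: ltn_expl.
set N := 2 ^ k.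
have hKk : K <= k by rewrite /k; lia.
have [hadd hch] := hK k hKk.
rewrite -/N in hadd hch.
have hN1 : N - 1 >= k by lia.
have hm : k <= a (N - 1) by have := inc_ge inc (N - 1); lia.
have hN : N = (N - 1).+1 by lia.
have hc0 : 0 < c.
  by rewrite lt0n; apply/eqP => e; apply: hc; exists 0; rewrite a0 e.
have [i [hi /andP [hi1 hi2]]] : exists i, i < N - 1 /\ a i < c < a i.+1.
  apply: (@bracket a c (N - 1)); first by rewrite a0.
    by apply: leq_trans hm; rewrite /k; lia.
  by move=> n e; apply: hc; exists n.
have hk0 : k0 <= N + i by rewrite /k in hk; lia.
have hgi := hg (N + i) hk0.
case: hgi => _ hgr.
apply: NNPP => hnc.
have eqn : a (N + i) = a N + a i by rewrite hadd //; lia.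
have eqn1 : a (N + i).+1 = a N + a i.+1 by rewrite -addnS hadd //; lia.
have hmN : a (N - 1) < a N by rewrite inc_ltE //; lia.
apply: (hgr (c + a N)); first by rewrite eqn; lia.
  by rewrite eqn1; lia.
move=> x y z hx hy hz hxy hyz he.
have bnd : forall w, w \in pfx a (N + i) -> w < c + a N.
  move=> w /mem_prefix [p hp <-]; have := inc_le inc hp; rewrite eqn; lia.
have mm : forall w, w \in rcons (pfx a (N + i)) (c + a N) -> w < c + a N -> w \in pfx a (N + i).
  by move=> w; rewrite mem_rcons in_cons => /orP [/eqP ->|//]; rewrite ltnn.
have hx' := mm x hx; have hy' := mm y hy.
move: hz; rewrite mem_rcons in_cons => /orP [/eqP ez|hz].
- subst z.
  move: (hx' (ltn_trans hxy hyz)) (hy' hyz) => {hx hy hx' hy'} hx hy.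
  case/mem_prefix: hx => p hp ex; case/mem_prefix: hy => q hq ey.
  subst x y.
  case: (ltnP q N) => hqN.
    have : a q <= a (N - 1) by apply: inc_le => //; lia.
    lia.
  have [q' eq'] : exists q', q = N + q' by exists (q - N); lia.
  subst q.
  rewrite hadd in he hxy; last by lia.
  case: (ltnP p N) => hpN.
    have : a p <= a (N - 1) by apply: inc_le => //; lia.
    have : a (N - 1) >= c + `|lam|%N + 1 by apply: leq_trans hm; rewrite /k; lia.
    lia.
  have [p' ep'] : exists p', p = N + p' by exists (p - N); lia.
  subst p.
  rewrite hadd in he hxy; last by lia.
  apply: hnc; exists (a p'), (a q'); split.
  + lia.
  + apply: leq_ltn_trans hi1; apply: inc_le => //; lia.
  + by exists p'.
  + by exists q'.
  + lia.
- have hzb := bnd _ hz.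
  move: (hx' (ltn_trans hxy (ltn_trans hyz hzb))) (hy' (ltn_trans hyz hzb)) => {hx hy hx' hy'} hx hy.
  case/mem_prefix: hx => p hp ex; case/mem_prefix: hy => q hq ey.
  case/mem_prefix: hz => r hr ez.
  subst x y z.
  by apply: (tf_all st p q r); rewrite // -(inc_ltE inc).
Qed.


Lemma S_char a lam : stanley a -> independent a lam ->
  forall c, (lam <= c%:Z)%R -> (inS a c <-> ~ covered a c).
Proof.
move=> st ind c hl; have inc := st.2.1; split.
  move=> [r er] [x [y [hxy hyc [p ep] [q eq] he]]]; subst x y c.
  by apply: (tf_all st p q r); rewrite -?(inc_ltE inc _ q) -?(inc_ltE inc q r).
by move=> hnc; apply: NNPP => hn; apply: hnc; apply: key st ind c hn hl.
Qed.

Lemma same_range a a' lam : stanley a -> independent a lam ->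
  stanley a' -> independent a' lam ->
  (forall c, (c%:Z < lam)%R -> (inS a c <-> inS a' c)) ->
  forall c, inS a c <-> inS a' c.
Proof.
move=> st ind st' ind' hlow c; elim/ltn_ind: c => c IH.
have [hl|hl] : (Posz c < lam)%R \/ (lam <= Posz c)%R by lia.
  exact: hlow.
rewrite (S_char st ind c hl) (S_char st' ind' c hl).
suff: covered a c <-> covered a' c by tauto.
split=> [[x [y [hxy hyc hx hy he]]]|[x [y [hxy hyc hx hy he]]]]; exists x, y; split => //.
- by apply/IH => //; apply: ltn_trans hxy hyc.
- by apply/IH.
- by apply/IH => //; apply: ltn_trans hxy hyc.
- by apply/IH.
Qed.

Lemma range_eq a a' : (forall n, a n < a n.+1) -> (forall n, a' n < a' n.+1) ->
  (forall c, inS a c <-> inS a' c) -> forall n, a n = a' n.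
Proof.
move=> inc inc' hr n; elim/ltn_ind: n => n IH.
have [p ep] : inS a (a' n) by apply/hr; exists n.
have [q eq] : inS a' (a n) by apply/hr; exists n.
have h1 : n <= p.
  rewrite leqNgt; apply/negP => hp; have := IH p hp; rewrite ep => e.
  by move: (inc_lt inc' hp); rewrite e ltnn.
have h2 : n <= q.
  rewrite leqNgt; apply/negP => hq; have := IH q hq; rewrite eq => e.
  by move: (inc_lt inc hq); rewrite -e ltnn.
have := inc_le inc h1; have := inc_le inc' h2; rewrite ep eq; lia.
Qed.

Definition memb (a : nat -> nat) (c : nat) := has (fun n => a n == c) (iota 0 c.+1).

Lemma memb_inS a c : (forall n, a n < a n.+1) -> memb a c <-> inS a c.
Proof.
move=> inc; split.
  by case/hasP => n _ /eqP e; exists n.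
move=> [n e]; apply/hasP; exists n; last by rewrite e.
by rewrite mem_iota add0n ltnS -e; apply: inc_ge.
Qed.

Definition pat (lam : int) (a : nat -> nat) : {ffun 'I_(absz lam) -> bool} :=
  [ffun i : 'I_(absz lam) => memb a i].

Lemma pat_eq lam a a' : stanley a -> independent a lam ->
  stanley a' -> independent a' lam -> pat lam a = pat lam a' -> forall n, a n = a' n.
Proof.
move=> st ind st' ind' hp; apply: range_eq; [exact: st.2.1|exact: st'.2.1|].
apply: (same_range st ind st' ind') => c hc.
have hc' : c < absz lam by lia.
move/ffunP: hp => /(_ (Ordinal hc')); rewrite !ffunE /= => e.
have h1 := memb_inS a c st.2.1; have h2 := memb_inS a' c st'.2.1; rewrite e in h1; tauto.
Qed.

Theorem mainTheorem12 (lam : int) :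
  exists L : seq (nat -> nat),
    forall a : nat -> nat, stanley a -> independent a lam ->
      exists2 i, i < size L & (forall n, a n = nth (fun _ => 0) L i n).
Proof.
pose P a := stanley a /\ independent a lam.
pose F (f : {ffun 'I_(absz lam) -> bool}) :=
  epsilon (inhabits (fun _ : nat => 0)) (fun a => P a /\ pat lam a = f).
exists [seq F f | f <- enum {ffun 'I_(absz lam) -> bool}].
move=> a st ind.
have hin : pat lam a \in enum {ffun 'I_(absz lam) -> bool} by rewrite mem_enum.
exists (index (pat lam a) (enum {ffun 'I_(absz lam) -> bool})).
  by rewrite size_map index_mem.
rewrite (nth_map (pat lam a)); last by rewrite index_mem.
rewrite nth_index //.
have [[st' ind'] hp] : P (F (pat lam a)) /\ pat lam (F (pat lam a)) = pat lam a.
  exact: (epsilon_spec (inhabits (fun _ : nat => 0)) (fun b => P b /\ pat lam b = pat lam a) (ex_intro _ a (conj (conj st ind) erefl))).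
apply: (pat_eq st ind st' ind'); by rewrite hp.
Qed.
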